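(* Let $h>k>2$ be integers and let $G$ be the graph with vertex set $\{0,1,\dots,2^h\}$ whose edge multiset consists of $k$ parallel edges between $i-1$ and $i$ for each $1\le i\le 2^h$, together with one edge $\{j2^i,(j+1)2^i\}$ for each $1\le i\le h$ and each $0\le j<2^{h-i}$. Then $$\inf\Big\{\max_{\emptyset\ne S\subsetneq V}\frac{1}{|E(S,\overline S)|}\sum_{e\in E(S,\overline S)}\mathcal R_D(e)\ :\ D\succ0,\ D\preceq_\square L_G\Big\}\ \ge\ \frac{h^2}{8(h+k)^2}.$$
   Context: $E(S,\overline S)$ is the multiset of edges with exactly one endpoint in $S$ (averages count parallel edges with multiplicity). For each edge $e=\{u,v\}$ fix an orientation, $\chi_e=\mathbf 1_u-\mathbf 1_v$, $L_G=\sum_e\chi_e\chi_e^\intercal$, $\mathcal R_D(e)=\chi_e^\intercal D^{-1}\chi_e$ for symmetric positive definite $D$; $A\preceq_\square B$ means $\mathbf 1_S^\intercal A\mathbf 1_S\le\mathbf 1_S^\intercal B\mathbf 1_S$ for all $\emptyset\ne S\subsetneq V$. *)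

(* Defs.v *)
From HB Require Import structures.
From mathcomp Require Import all_boot all_order all_algebra.
Set Implicit Arguments. Unset Strict Implicit. Unset Printing Implicit Defensive.
Import Order.TTheory GRing.Theory Num.Theory.
Local Open Scope ring_scope.

Definition edgesG (h k : nat) : seq (nat * nat) :=
  flatten [seq nseq k (i, i.+1) | i <- iota 0 (2 ^ h)] ++
  flatten [seq [seq (j * 2 ^ i, j.+1 * 2 ^ i)%N | j <- iota 0 (2 ^ (h - i))]
          | i <- iota 1 h].

Definition vtx (h : nat) (u : nat) : 'I_((2 ^ h).+1) := inord u.

Definition ind (R : nzRingType) (n : nat) (S : {set 'I_n}) : 'cV[R]_n :=
  \col_i (if i \in S then 1 else 0).

Definition chi (R : nzRingType) (h : nat) (e : nat * nat) : 'cV[R]_((2 ^ h).+1) :=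
  ind R [set vtx h e.1] - ind R [set vtx h e.2].

Definition lapG (R : comNzRingType) (h k : nat) : 'M[R]_((2 ^ h).+1) :=
  \sum_(e <- edgesG h k) (chi R h e *m (chi R h e)^T).

Definition qf (R : nzRingType) (n : nat) (A : 'M[R]_n) (x : 'cV[R]_n) : R :=
  ((x^T *m A *m x) 0 0).

Definition posdef (R : numDomainType) (n : nat) (D : 'M[R]_n) : Prop :=
  D^T = D /\ forall x : 'cV[R]_n, x != 0 -> 0 < qf D x.

Definition cut_le (R : numDomainType) (n : nat) (A B : 'M[R]_n) : Prop :=
  forall S : {set 'I_n}, S != set0 -> S != [set: 'I_n] ->
    qf A (ind R S) <= qf B (ind R S).

Definition effres (R : numFieldType) (h : nat) (D : 'M[R]_((2 ^ h).+1))
  (e : nat * nat) : R := qf (invmx D) (chi R h e).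
Arguments effres {R} h D e.

Definition cutEdges (h k : nat) (S : {set 'I_((2 ^ h).+1)}) : seq (nat * nat) :=
  [seq e <- edgesG h k | (vtx h e.1 \in S) != (vtx h e.2 \in S)].
Arguments cutEdges h k S : clear implicits.

Definition cutAvg (R : numFieldType) (h k : nat) (D : 'M[R]_((2 ^ h).+1))
  (S : {set 'I_((2 ^ h).+1)}) : R :=
  (\sum_(e <- cutEdges h k S) effres h D e) / (size (cutEdges h k S))%:R.
Arguments cutAvg {R} h k D S.

(* Main.v *)
Require Import Defs.
From HB Require Import structures.
From mathcomp Require Import all_boot all_order all_algebra.
From mathcomp Require Import ring lra zify.
Import Order.TTheory GRing.Theory Num.Theory.
Local Open Scope ring_scope.
Set Implicit Arguments. Unset Strict Implicit. Unset Printing Implicit Defensive.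

Section Quad.
Variable R : rcfType.
Variable n : nat.
Variable D : 'M[R]_n.
Hypothesis HDs : D^T = D.
Hypothesis HDp : forall x : 'cV[R]_n, x != 0 -> 0 < qf D x.

Definition dot (u y : 'cV[R]_n) : R := (u^T *m y) 0 0.
Definition bil (u v : 'cV[R]_n) : R := (u^T *m D *m v) 0 0.

Lemma scal_tr (A : 'M[R]_1) : A^T 0 0 = A 0 0.
Proof. by rewrite mxE. Qed.

Lemma bilC u v : bil u v = bil v u.
Proof.
rewrite /bil -scal_tr !trmx_mul trmxK HDs mulmxA //.
Qed.

Lemma dotC u v : dot u v = dot v u.
Proof. by rewrite /dot -scal_tr trmx_mul trmxK. Qed.

Lemma qf_bil u : qf D u = bil u u.
Proof. by []. Qed.

Lemma bilDl u v w : bil (u + v) w = bil u w + bil v w.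
Proof. by rewrite /bil linearD /= !mulmxDl mxE. Qed.
Lemma bilZl a u w : bil (a *: u) w = a * bil u w.
Proof. by rewrite /bil linearZ /= -!scalemxAl mxE. Qed.
Lemma bilNl u w : bil (- u) w = - bil u w.
Proof. by rewrite -scaleN1r bilZl mulN1r. Qed.
Lemma bilDr u v w : bil w (u + v) = bil w u + bil w v.
Proof. by rewrite bilC bilDl !(bilC w). Qed.
Lemma bilZr a u w : bil w (a *: u) = a * bil w u.
Proof. by rewrite bilC bilZl bilC. Qed.
Lemma bilNr u w : bil w (- u) = - bil w u.
Proof. by rewrite bilC bilNl bilC. Qed.

Lemma qf_ge0 x : 0 <= qf D x.
Proof.
case: (eqVneq x 0) => [->|/HDp/ltW //].
by rewrite /qf mulmx0 mxE.
Qed.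

Lemma unitD : D \in unitmx.
Proof.
rewrite -row_free_unit -kermx_eq0; apply/negPn/negP => /rowV0Pn [v].
rewrite sub_kermx => /eqP vD vn0.
have : v^T != 0 by rewrite -(inj_eq (@trmx_inj _ _ _)) trmxK linear0.
move/HDp; rewrite /qf trmxK vD mul0mx mxE ltxx //.
Qed.

Lemma par_law u v : qf D (u + v) + qf D (u - v) = 2 * qf D u + 2 * qf D v.
Proof.
rewrite !qf_bil !bilDl !bilDr !bilNl !bilNr (bilC v u); ring.
Qed.

Lemma resist_lb (c y : 'cV[R]_n) (t : R) :
  2 * t * dot c y - t ^+ 2 * qf D y <= qf (invmx D) c.
Proof.
set z := invmx D *m c.
have Dz : D *m z = c by rewrite /z mulmxA mulmxV ?unitD // mul1mx.
have := qf_ge0 (t *: y - z).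
rewrite qf_bil bilDl !bilDr !bilZl !bilZr !bilNl !bilNr.
have e1 : bil y z = dot y c by rewrite /bil /dot -mulmxA Dz.
have e2 : bil z z = qf (invmx D) c.
  rewrite /bil -mulmxA Dz -/(dot z c) dotC /dot /z /qf mulmxA //.
rewrite (bilC z y) e1 e2 -qf_bil (dotC y c) => H.
rewrite expr2; lra.
Qed.
End Quad.

Section Graph.
Variable R : rcfType.
Variables h k : nat.
Local Notation N := (2 ^ h)%N.
Local Notation V := 'I_(N.+1).

Local Notation dot' := (@dot R N.+1).

Lemma dot_ind (S : {set V}) y : dot' (ind R S) y = \sum_(i in S) y i 0.
Proof.
rewrite /dot' mxE [RHS]big_mkcond /=; apply: eq_bigr => i _.
by rewrite !mxE; case: (i \in S); rewrite ?mul1r ?mul0r.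
Qed.

Lemma dot_chi a b y : dot' (chi R h (a, b)) y = y (vtx h a) 0 - y (vtx h b) 0.
Proof.
rewrite /chi /dot' linearB /= mulmxBl.
rewrite (_ : forall A B : 'M[R]_1, (A - B) 0 0 = A 0 0 - B 0 0); last by move=> ??; rewrite !mxE.
have H := dot_ind. rewrite /dot' in H. by rewrite !H !big_set1.
Qed.

Lemma vtxK a : (a <= N)%N -> (vtx h a : nat) = a.
Proof. by move=> ha; rewrite /vtx inordK. Qed.

Definition Pf (m : nat) : {set V} := [set v : V | (v < m)%N].
Definition pf (m : nat) : 'cV[R]_(N.+1) := ind R (Pf m).

Lemma pf_vtx m a : (a <= N)%N -> pf m (vtx h a) 0 = ((a < m)%N)%:R.
Proof. by move=> ha; rewrite /pf /ind /Pf mxE inE vtxK //; case: ifP. Qed.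

Lemma qf_rank1 (c x : 'cV[R]_(N.+1)) : qf (c *m c^T) x = (dot' c x) ^+ 2.
Proof.
rewrite /qf /dot'.
have -> : x^T *m (c *m c^T) *m x = (x^T *m c) *m (c^T *m x) by rewrite !mulmxA.
rewrite mxE big_ord1 expr2; congr (_ * _).
by rewrite -scal_tr trmx_mul trmxK.
Qed.

Lemma qf_lap (S : {set V}) :
  qf (lapG R h k) (ind R S) = (size (cutEdges h k S))%:R.
Proof.
rewrite /lapG /qf mulmx_sumr mulmx_suml summxE.
rewrite /cutEdges size_filter -sum1_count natr_sum [RHS]big_mkcond /=.
apply: eq_bigr => -[a b] _.
rewrite -/(qf _ _) qf_rank1 dot_chi /ind !mxE /=.
by case: (vtx h a \in S); case: (vtx h b \in S); rewrite /= ?subrr ?subr0 ?sub0r ?expr2 ?mulr1 ?mulrNN ?mulr0 ?mul1r.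
Qed.


Lemma count_int (a b M : nat) : (a <= b)%N -> (b <= M)%N ->
  \sum_(0 <= m < M) (((a <= m) && (m < b))%N : nat)%:R = (b - a)%:R :> R.
Proof.
move=> ab bM.
rewrite (@big_cat_nat _ _ _ a 0 M) ?(leq_trans ab) //= (@big_cat_nat _ _ _ b a M) //=.
rewrite big1_seq ?add0r; last by move=> i /andP[_]; rewrite mem_index_iota => /andP[_ ia]; rewrite leqNgt ia.
rewrite [X in _ + X]big1_seq ?addr0; last first.
  by move=> i /andP[_]; rewrite mem_index_iota => /andP[bi _]; rewrite (leq_trans ab bi) ltnNge bi.
rewrite big_nat_cond (eq_bigr (fun _ => 1)); last by move=> i /andP[/andP[-> ->]].
by rewrite -big_nat_cond sumr_const_nat.
Qed.

Definition goodE (e : nat * nat) := ((e.1 < e.2) && (e.2 <= N))%N.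

Lemma edges_good : all goodE (edgesG h k).
Proof.
rewrite /edgesG all_cat; apply/andP; split.
  apply/allP => e /flattenP [s /mapP [i]]; rewrite mem_iota => /andP[_ hi] ->.
  by move/nseqP => [-> _]; rewrite /goodE /= leqnn /= add0n in hi *.
apply/allP => e /flattenP [s /mapP [i]]; rewrite mem_iota => /andP[i1 hi] ->.
move/mapP => [j]; rewrite mem_iota add0n => /andP[_ hj] ->.
rewrite /goodE /= ltn_pmul2r ?expn_gt0 // ltnSn /=.
rewrite add1n ltnS in hi.
by rewrite -(subnK hi) expnD leq_pmul2r ?expn_gt0.
Qed.

Lemma exch (f : nat * nat -> R) :
  \sum_(0 <= m < N) \sum_(e <- cutEdges h k (Pf m.+1)) f e =
  \sum_(e <- edgesG h k) (e.2 - e.1)%:R * f e.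
Proof.
under eq_bigr => m _ do rewrite big_filter big_mkcond /=.
rewrite exchange_big /=.
rewrite big_seq_cond [RHS]big_seq_cond; apply: eq_bigr => -[a b] /andP[he _].
have /andP[ab bN] : goodE (a, b) by move/allP: edges_good => /(_ _ he).
rewrite /= in ab bN.
rewrite -(count_int (ltnW ab) bN) mulr_suml /=; apply: eq_bigr => m _.
have aN : (a <= N)%N by rewrite (leq_trans (ltnW ab)).
rewrite /Pf !inE (vtxK aN) (vtxK bN) !ltnS.
case: (leqP a m) => am; case: (leqP b m) => bm /=.
- by rewrite mul0r.
- by rewrite mul1r.
- by move: am; rewrite ltnNge (leq_trans (ltnW ab) bm).
- by rewrite mul0r.
Qed.


Lemma sum_edges (F : nat * nat -> R) :
  \sum_(e <- edgesG h k) F e =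
  \sum_(i <- iota 0 N) iter k (+%R (F (i, i.+1))) 0 +
  \sum_(l <- iota 1 h) \sum_(j <- iota 0 (2 ^ (h - l))) F (j * 2 ^ l, j.+1 * 2 ^ l)%N.
Proof.
rewrite /edgesG big_cat !big_flatten !big_map /=; congr (_ + _).
  by apply: eq_bigr => i _; rewrite big_nseq.
by apply: eq_bigr => i _; rewrite big_map.
Qed.

Lemma iter_ge0 (x : R) m : 0 <= x -> 0 <= iter m (+%R x) 0.
Proof. by move=> x0; elim: m => //= m IH; rewrite addr_ge0. Qed.

Lemma iter_const (x : R) m : iter m (+%R x) 0 = x *+ m.
Proof. by elim: m => //= m ->; rewrite mulrS. Qed.

Lemma sum_len : \sum_(e <- edgesG h k) ((e.2 - e.1)%N)%:R = (N * (k + h))%:R :> R.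
Proof.
rewrite sum_edges /=.
under eq_bigr => i _ do rewrite iter_const subSnn.
under [X in _ + X]eq_bigr => l _ do under eq_bigr => j _ do rewrite -mulnBl subSnn mul1n.
rewrite !big_const_seq !iter_const count_predT size_iota.
under eq_bigr => l _ do rewrite big_const_seq iter_const count_predT size_iota.
rewrite big_seq (eq_bigr (fun _ => N%:R)); last first.
  move=> l; rewrite mem_iota add1n ltnS => /andP[_ lh].
  by rewrite -mulrnA -expnD subnKC.
rewrite -big_seq big_const_seq iter_const count_predT size_iota.
by rewrite -!mulrnA -natrD mul1n mulnDr mulnC.
Qed.


Definition Ed (l j : nat) : nat * nat := (j * 2 ^ l, j.+1 * 2 ^ l)%N.

Lemma sum_long (f : nat * nat -> R) : (0 < h)%N -> (forall e, 0 <= f e) ->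
  \sum_(1 <= l < h) \sum_(0 <= j < 2 ^ (h - l)) (2 ^ l)%:R * f (Ed l j)
  <= \sum_(e <- edgesG h k) ((e.2 - e.1)%N)%:R * f e.
Proof.
move=> h0 f0; rewrite sum_edges.
have iter0 : 0 <= \sum_(i <- iota 0 N) iter k (+%R (((i.+1 - i)%N)%:R * f (i, i.+1))) 0.
  by apply: sumr_ge0 => i _; apply: iter_ge0; rewrite mulr_ge0.
apply: ler_wpDl => //.
have -> : iota 1 h = index_iota 1 h.+1 by rewrite /index_iota subSS subn0.
rewrite big_nat_recr //=.
apply: ler_wpDr => /=.
  by apply: sumr_ge0 => j _; rewrite mulr_ge0.
apply: ler_sum_nat => l _; rewrite /index_iota subn0; apply: ler_sum => j _.
by rewrite /Ed /= -mulnBl subSnn mul1n.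
Qed.

End Graph.

Section Main.
Variable R : rcfType.
Variables h k : nat.
Local Notation N := (2 ^ h)%N.
Variable D : 'M[R]_(N.+1).
Hypothesis HDs : D^T = D.
Hypothesis HDp : forall x : 'cV[R]_(N.+1), x != 0 -> 0 < qf D x.

Local Notation pf := (@pf R h).

Definition sig (l j : nat) : 'cV[R]_(N.+1) :=
  \sum_(j * 2 ^ l <= s < j.+1 * 2 ^ l) pf s.+1.

Definition Fl (l : nat) : R :=
  \sum_(0 <= j < 2 ^ (h - l)) qf D (sig l j) / (2 ^ l)%:R.

Lemma dot_sum u c d (y : nat -> 'cV[R]_(N.+1)) :
  dot u (\sum_(c <= s < d) y s) = \sum_(c <= s < d) dot u (y s).
Proof. by rewrite /dot mulmx_sumr summxE. Qed.

Lemma dot_chi_sig a b c d : (a <= N)%N -> (b <= N)%N ->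
  dot (chi R h (a, b)) (\sum_(c <= s < d) pf s.+1) =
  \sum_(c <= s < d) (((a <= s)%N : nat)%:R - ((b <= s)%N : nat)%:R).
Proof.
move=> aN bN; rewrite dot_sum; apply: eq_bigr => s _.
by rewrite dot_chi !pf_vtx // !ltnS.
Qed.

Lemma cnt_in a b c d : (a <= c)%N -> (d <= b)%N -> (c <= d)%N ->
  \sum_(c <= s < d) (((a <= s)%N : nat)%:R - ((b <= s)%N : nat)%:R) = (d - c)%:R :> R.
Proof.
move=> ac db cd.
rewrite big_nat_cond (eq_bigr (fun _ => 1)); last first.
  move=> s /andP[/andP[cs sd] _].
  by rewrite (leq_trans ac cs) leqNgt (leq_trans sd db) subr0.
by rewrite -big_nat_cond sumr_const_nat.
Qed.

Lemma cnt_left a b c d : (d <= a)%N -> (a <= b)%N ->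
  \sum_(c <= s < d) (((a <= s)%N : nat)%:R - ((b <= s)%N : nat)%:R) = 0 :> R.
Proof.
move=> da ab; rewrite big_nat_cond big1 // => s /andP[/andP[cs sd] _].
have sa : (s < a)%N by apply: leq_trans sd da.
by rewrite leqNgt sa leqNgt (leq_trans sa ab) subrr.
Qed.

Lemma cnt_right a b c d : (b <= c)%N -> (a <= b)%N ->
  \sum_(c <= s < d) (((a <= s)%N : nat)%:R - ((b <= s)%N : nat)%:R) = 0 :> R.
Proof.
move=> bc ab; rewrite big_nat_cond big1 // => s /andP[/andP[cs sd] _].
by rewrite (leq_trans bc cs) (leq_trans ab (leq_trans bc cs)) subrr.
Qed.

Lemma sig_split l j : sig l.+1 j = sig l (2 * j) + sig l (2 * j).+1.
Proof.
rewrite /sig (@big_cat_nat _ _ _ ((2 * j).+1 * 2 ^ l)); first last.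
- rewrite expnS; nia.
- rewrite expnS; nia.
by rewrite !expnS; congr (_ + _); apply: congr_big_nat => //; lia.
Qed.

Lemma pair_sum (g : nat -> R) M :
  \sum_(0 <= j < 2 * M) g j = \sum_(0 <= j < M) (g (2 * j)%N + g (2 * j).+1).
Proof.
elim: M => [|M IH]; first by rewrite !big_geq.
rewrite [RHS]big_nat_recr //= -IH.
have -> : (2 * M.+1 = (2 * M).+2)%N by rewrite mulnS.
by rewrite big_nat_recr // big_nat_recr //= addrA.
Qed.



Lemma Fdiff l : (l < h)%N ->
  Fl l - Fl l.+1 =
  \sum_(0 <= j < 2 ^ (h - l.+1)) qf D (sig l (2 * j) - sig l (2 * j).+1) / (2 ^ l.+1)%:R.
Proof.
move=> lh.
have e : (2 ^ (h - l) = 2 * 2 ^ (h - l.+1))%N by rewrite -expnS subnSK.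
rewrite /Fl e pair_sum -sumrB; apply: eq_bigr => j _.
rewrite sig_split.
have := par_law HDs (sig l (2 * j)) (sig l (2 * j).+1).
rewrite expnS natrM.
have x0 : (2 ^ l)%:R != 0 :> R by rewrite pnatr_eq0 expn_eq0.
move=> H.
rewrite (_ : qf D (sig l (2 * j) + sig l (2 * j).+1) =
   2 * qf D (sig l (2 * j)) + 2 * qf D (sig l (2 * j).+1) - qf D (sig l (2 * j) - sig l (2 * j).+1)); last by rewrite -H addrK.
by field.
Qed.

Lemma dotB (u y1 y2 : 'cV[R]_(N.+1)) : dot u (y1 - y2) = dot u y1 - dot u y2 :> R.
Proof. by rewrite /dot mulmxBr !mxE. Qed.

Lemma level l tau : (l < h)%N ->
  tau * N%:R - tau ^+ 2 * (Fl l - Fl l.+1) <=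
  \sum_(0 <= j < 2 ^ (h - l)) (2 ^ l)%:R * effres h D (Ed l j).
Proof.
move=> lh.
rewrite Fdiff // mulr_sumr.
have e : (2 ^ (h - l) = 2 * 2 ^ (h - l.+1))%N by rewrite -expnS subnSK.
rewrite e pair_sum.
have -> : tau * N%:R = \sum_(0 <= j < 2 ^ (h - l.+1)) tau * (2 ^ l.+1)%:R.
  rewrite sumr_const_nat subn0 -mulrnAr -mulrnA -expnD subnKC //.
rewrite -sumrB; apply: ler_sum_nat => j /andP[_ hj].
have hN : ((2 * j).+2 * 2 ^ l <= N)%N.
  have : (j.+1 * 2 ^ l.+1 <= 2 ^ (h - l.+1) * 2 ^ l.+1)%N by rewrite leq_mul2r hj orbT.
  rewrite -expnD subnK // expnS; lia.
set y := sig l (2 * j) - sig l (2 * j).+1.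
have hA : ((2 * j) * 2 ^ l <= N)%N by apply: leq_trans hN; rewrite leq_mul2r; lia.
have hB : ((2 * j).+1 * 2 ^ l <= N)%N by apply: leq_trans hN; rewrite leq_mul2r; lia.
have p2 : (0 < 2 ^ l)%N by rewrite expn_gt0.
have dL : dot (chi R h (Ed l (2 * j))) y = (2 ^ l)%:R.
  rewrite /y dotB /sig !dot_chi_sig // cnt_in // ?leq_mul2r ?leqnSn ?orbT //.
  rewrite cnt_right // ?leq_mul2r ?leqnSn ?orbT // subr0 -mulnBl subSnn mul1n //.
have dR : dot (chi R h (Ed l (2 * j).+1)) y = - (2 ^ l)%:R.
  rewrite /y dotB /sig !dot_chi_sig // cnt_left // ?leq_mul2r ?leqnSn ?orbT //.
  rewrite cnt_in // ?leq_mul2r ?leqnSn ?orbT // sub0r -mulnBl subSnn mul1n //.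
set x := (2 ^ l)%:R : R.
have x0 : 0 < x by rewrite ltr0n.
set t := tau / (2 * x).
have H1 := resist_lb HDs HDp (chi R h (Ed l (2 * j))) y t.
have H2 := resist_lb HDs HDp (chi R h (Ed l (2 * j).+1)) y (- t).
rewrite dL in H1; rewrite dR in H2.
rewrite /effres.
set Q := qf D y in H1 H2 *.
set r1 := qf (invmx D) _ in H1 *.
set r2 := qf (invmx D) _ in H2 *.
rewrite expnS natrM -/x.
have -> : tau * (2%:R * x) - tau ^+ 2 * (Q / (2%:R * x)) =
   x * (2 * t * x - t ^+ 2 * Q) + x * (2 * - t * - x - (- t) ^+ 2 * Q).
  rewrite /t; field; by rewrite lt0r_neq0.
by rewrite lerD // ler_wpM2l // ltW.
Qed.

Lemma effres_ge0 e : 0 <= effres h D e.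
Proof. have := resist_lb HDs HDp (chi R h e) 0 0; rewrite /effres; apply: le_trans; rewrite expr2 !(mulr0, mul0r) subr0 //. Qed.

Lemma Fl_ge0 l : 0 <= Fl l.
Proof. by apply: sumr_ge0 => j _; rewrite divr_ge0 // qf_ge0. Qed.

Lemma F1_le_F0 : (0 < h)%N -> Fl 1 <= Fl 0.
Proof.
move=> h0; rewrite -subr_ge0 Fdiff //; apply: sumr_ge0 => j _.
by rewrite divr_ge0 // qf_ge0.
Qed.

Lemma Pf_ne0 m : (0 < m)%N -> Pf h m != set0.
Proof. by move=> m0; apply/set0Pn; exists ord0; rewrite inE. Qed.

Lemma Pf_neT m : (m <= N)%N -> Pf h m != setT.
Proof.
move=> mN; apply/negP => /eqP PT.
have : (ord_max : 'I_N.+1) \in Pf h m by rewrite PT inE.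
by rewrite inE /= ltnNge mN.
Qed.

Lemma sum_cut_size :
  \sum_(0 <= m < N) (size (cutEdges h k (Pf h m.+1)))%:R = (N * (k + h))%:R :> R.
Proof.
rewrite -(@sum_len R h k).
have := @exch R h k (fun _ => 1).
under eq_bigr => m _ do rewrite big_const_seq iter_const count_predT.
under [X in _ = X -> _]eq_bigr => e _ do rewrite mulr1.
by move=> <-.
Qed.

End Main.

Lemma F0_le (R : rcfType) (h k : nat) (D : 'M[R]_((2 ^ h).+1)) :
  cut_le D (lapG R h k) -> Fl D 0 <= ((2 ^ h) * (k + h))%:R.
Proof.
move=> HDL; rewrite -(sum_cut_size R h k) /Fl subn0.
apply: ler_sum_nat => j /andP[_ jN].
rewrite expn0 divr1 /sig !muln1 big_nat1.
rewrite -qf_lap; apply: HDL; first exact: Pf_ne0.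
exact: Pf_neT.
Qed.

Unset Implicit Arguments.
Theorem mainTheorem14 (R : rcfType) (h k : nat) (hk : (k < h)%N) (k2 : (2 < k)%N)
  (D : 'M[R]_((2 ^ h).+1)) (HD : posdef D) (HDL : cut_le D (lapG R h k)) :
  exists S : {set 'I_((2 ^ h).+1)}, [/\ S != set0, S != [set: 'I_((2 ^ h).+1)] &
    (h ^ 2)%:R / (8 * (h + k) ^ 2)%:R <= cutAvg h k D S].
Proof.
have [HDs HDp] := HD.
set T := (h ^ 2)%:R / (8 * (h + k) ^ 2)%:R.
have h0 : (0 < h)%N by lia.
case: (boolP [exists m : 'I_(2 ^ h), T <= cutAvg h k D (Pf h m.+1)]).
  move/existsP => [m Hm]; exists (Pf h m.+1); split => //.
    exact: Pf_ne0.
  exact: Pf_neT (ltn_ord m).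
move/existsPn => Hlt; exfalso.
have Hcs : \sum_(0 <= m < 2 ^ h) \sum_(e <- cutEdges h k (Pf h m.+1)) effres h D e
    <= T * ((2 ^ h) * (k + h))%:R.
  rewrite -(sum_cut_size R h k) mulr_sumr !big_mkord; apply: ler_sum => m _.
  have := Hlt m; rewrite -ltNge /cutAvg.
  case: (eqVneq (size (cutEdges h k (Pf h m.+1))) 0%N) => [sz0 | sz].
    by move=> _; rewrite sz0 mulr0; move/eqP: sz0; rewrite size_eq0 => /eqP ->; rewrite big_nil.
  have szp : 0 < (size (cutEdges h k (Pf h m.+1)))%:R :> R by rewrite ltr0n lt0n.
  by rewrite ltr_pdivrMr // => /ltW.
have Hlong := sum_long k h0 (effres_ge0 HDs HDp).
rewrite -exch in Hlong.
set Nr := (2 ^ h)%:R : R.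
set K := (k + h)%:R : R.
set H := h%:R : R.
have Nr0 : 0 < Nr by rewrite ltr0n expn_gt0.
have K0 : 0 < K by rewrite ltr0n; lia.
have H4 : 4 <= H by rewrite /H (ler_nat R 4 h); lia.
set tau := (H - 1) / (2 * K).
have Hlev : \sum_(1 <= l < h) (tau * Nr - tau ^+ 2 * (Fl D l - Fl D l.+1))
    <= \sum_(1 <= l < h) \sum_(0 <= j < 2 ^ (h - l)) (2 ^ l)%:R * effres h D (Ed l j).
  apply: ler_sum_nat => l /andP[_ lh]; exact: level.
have Htel : \sum_(1 <= l < h) (Fl D l - Fl D l.+1) = Fl D 1 - Fl D h.
  rewrite (telescope_sumr_eq (fun l => - Fl D l)); first by rewrite opprK addrC.
    exact: h0.
  by move=> l _; rewrite opprK addrC.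
rewrite sumrB sumr_const_nat -mulr_sumr Htel in Hlev.
have HF : Fl D 1 - Fl D h <= Nr * K.
  rewrite /Nr /K -natrM.
  apply: le_trans (F0_le HDL).
  have := F1_le_F0 HDs HDp h0; have := Fl_ge0 HDp h; lra.
have Hfin : tau * Nr *+ (h - 1) - tau ^+ 2 * (Nr * K) <= T * (Nr * K).
  rewrite /Nr /K -natrM; apply: le_trans Hcs; apply: le_trans Hlong.
  apply: le_trans Hlev; rewrite lerD2l lerN2 ler_wpM2l ?sqr_ge0 //.
  by rewrite -natrM in HF.
have eT : T = H ^+ 2 / (8 * K ^+ 2).
  by rewrite /T /H /K natrX natrM natrX addnC.
rewrite eT in Hfin. rewrite -[_ *+ (h - 1)]mulr_natr in Hfin. rewrite natrB in Hfin; last exact: h0.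
move: Hfin; rewrite -/H.
have -> : tau * Nr * (H - 1%:R) - tau ^+ 2 * (Nr * K) = Nr * (H - 1) ^+ 2 / (4 * K).
  rewrite /tau; field; rewrite -natrD pnatr_eq0; lia.
have -> : H ^+ 2 / (8 * K ^+ 2) * (Nr * K) = Nr * H ^+ 2 / (8 * K).
  field; rewrite -natrD pnatr_eq0; lia.
have -> : Nr * (H - 1) ^+ 2 / (4 * K) = Nr * H ^+ 2 / (8 * K) + Nr * (H * (H - 4) + 2) / (8 * K).
  field; rewrite -natrD pnatr_eq0; lia.
have Hp : 0 < H * (H - 4) + 2.
  have : 0 <= H * (H - 4) by apply: mulr_ge0; lra.
  lra.
have : 0 < Nr * (H * (H - 4) + 2) / (8 * K).
  by apply: divr_gt0; apply: mulr_gt0 => //; lra.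
lra.
Qed.
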